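(* Let $X$ be a metric space, let $A\subseteq X$ be nonempty and let $Y$ be a hyperconvex metric space. Let $\Phi_c:\mathcal{N}(A,Y)\to\mathcal{P}(\mathcal{N}(X,Y))$ assign to each $f$ the set of all $f'\in\mathcal{N}(X,Y)$ with $f'|_A=f$ and $f'(X)\subseteq\mathrm{cov}(f(A))$. Then $\Phi_c$ is a nonexpansive multivalued mapping, i.e. $\Phi_c(f)\neq\emptyset$ and $H(\Phi_c(f),\Phi_c(g))\le d_\infty(f,g)$ for all $f,g\in\mathcal{N}(A,Y)$.
   Context: A metric space $Y$ is hyperconvex if $\bigcap_\alpha B(x_\alpha,r_\alpha)\ne\emptyset$ for every family of points $x_\alpha\in Y$ and $r_\alpha>0$ with $d(x_\alpha,x_\beta)\le r_\alpha+r_\beta$ ($B$ = closed ball). For a nonempty bounded $D\subseteq Y$, the admissible hull $\mathrm{cov}(D)$ is the intersection of all closed balls containing $D$, equivalently $\bigcap_{y\in Y}B(y,r_y(D))$ with $r_y(D)=\sup_{a\in D}d(y,a)$. $\mathcal{N}(A,Y)$ is the set of bounded nonexpansive maps $A\to Y$ with the supremum metric $d_\infty$; $H$ is the Pompeiu–Hausdorff distance in $(\mathcal{N}(X,Y),d_\infty)$. *)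

(* Defs.v *)
From HB Require Import structures.
From mathcomp Require Import all_boot all_order all_algebra.
From mathcomp Require Import all_classical all_reals ereal.
Set Implicit Arguments. Unset Strict Implicit. Unset Printing Implicit Defensive.
Import Order.TTheory GRing.Theory Num.Theory.
Local Open Scope classical_set_scope.
Local Open Scope ring_scope.

Record metricSpace (R : realType) := MetricSpace {
  msT :> Type;
  mdist : msT -> msT -> R;
  mdist_self : forall x, mdist x x = 0;
  mdist_eq0 : forall x y, mdist x y = 0 -> x = y;
  mdist_sym : forall x y, mdist x y = mdist y x;
  mdist_triangle : forall x y z, mdist x z <= mdist x y + mdist y z }.
Arguments mdist {R} m.

Section Defs.
Variable R : realType.

Definition cball (Y : metricSpace R) (c : Y) (r : R) : set Y :=
  [set y | mdist Y c y <= r].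

Definition hyperconvex (Y : metricSpace R) : Prop :=
  forall (I : Type) (x : I -> Y) (r : I -> R),
    (forall i, 0 < r i) ->
    (forall i j, mdist Y (x i) (x j) <= r i + r j) ->
    exists y : Y, forall i, y \in cball (x i) (r i).

Definition cov (Y : metricSpace R) (D : set Y) : set Y :=
  [set y | forall (c : Y) (r : R), D `<=` cball c r -> cball c r y].

Definition subdist (X : metricSpace R) (A : set X) (a b : {x : X | A x}) : R :=
  mdist X (proj1_sig a) (proj1_sig b).

Definition bounded_fun (T : Type) (Y : metricSpace R) (f : T -> Y) : Prop :=
  exists (y0 : Y) (M : R), forall t, mdist Y y0 (f t) <= M.

Definition nonexpansive (T : Type) (dT : T -> T -> R) (Y : metricSpace R)
  (f : T -> Y) : Prop := forall s t, mdist Y (f s) (f t) <= dT s t.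

Definition NE (T : Type) (dT : T -> T -> R) (Y : metricSpace R) : set (T -> Y) :=
  [set f | bounded_fun f /\ nonexpansive dT f].

Definition dinf (T : Type) (Y : metricSpace R) (f g : T -> Y) : \bar R :=
  ereal_sup (range (fun t => (mdist Y (f t) (g t))%:E)).

Definition hausdorff (U : Type) (d : U -> U -> \bar R) (S T : set U) : \bar R :=
  maxe (ereal_sup [set ereal_inf [set d s t | t in T] | s in S])
       (ereal_sup [set ereal_inf [set d s t | s in S] | t in T]).

Definition Phi_c (X Y : metricSpace R) (A : set X) (f : {x : X | A x} -> Y)
  : set (X -> Y) :=
  [set f' | NE (mdist X) f'
            /\ (forall a : {x : X | A x}, f' (proj1_sig a) = f a)
            /\ (forall x : X, cov (range f) (f' x))].

End Defs.

(* Main.v *)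
Require Import Defs.
From HB Require Import structures.
From mathcomp Require Import all_boot all_order all_algebra.
From mathcomp Require Import all_classical all_reals ereal.
From mathcomp Require Import lra.
Import Defs.
Import Order.TTheory GRing.Theory Num.Theory.
Local Open Scope classical_set_scope.
Local Open Scope ring_scope.

Lemma dge0 (R : realType) (X : metricSpace R) (x y : X) : 0 <= mdist X x y.
Proof.
have := mdist_triangle x y x; rewrite mdist_self (mdist_sym y x) => h; lra.
Qed.

Arguments dge0 {R X}.

Lemma ext_lemma (R : realType) (X Y : metricSpace R) (hY : hyperconvex Y)
 (K : X -> set (msT Y * R)%type) (G0 : set (msT X * msT Y)%type)
 (Kpos : forall x k, K x k -> 0 < k.2)
 (K1 : forall x k l, K x k -> K x l -> mdist Y k.1 l.1 <= k.2 + l.2)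
 (K2 : forall x z y k, (forall q, K z q -> mdist Y q.1 y <= q.2) -> K x k ->
    mdist Y y k.1 <= mdist X x z + k.2)
 (G0v1 : forall p q, G0 p -> G0 q -> mdist Y p.2 q.2 <= mdist X p.1 q.1)
 (G0v2 : forall p, G0 p -> forall k, K p.1 k -> mdist Y k.1 p.2 <= k.2) :
 exists g : X -> Y, (forall p, G0 p -> g p.1 = p.2) /\
   (forall x x', mdist Y (g x) (g x') <= mdist X x x') /\
   (forall x k, K x k -> mdist Y k.1 (g x) <= k.2).
Proof.
pose valid (G : set (msT X * msT Y)%type) :=
  (forall p q, G p -> G q -> mdist Y p.2 q.2 <= mdist X p.1 q.1) /\
  (forall p, G p -> forall k, K p.1 k -> mdist Y k.1 p.2 <= k.2).
have [|M [PM Mmax]] := @Zorn_bigcup _ (fun G => valid (G `|` G0)).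
  move=> F FP Ftot; split.
    move=> p q [[S FS Sp]|G0p] [[T FT Tq]|G0q].
    - case: (Ftot S T FS FT) => ST.
        by apply: (FP T FT).1; left; [apply: ST|].
      by apply: (FP S FS).1; left; [|apply: ST].
    - by apply: (FP S FS).1; [left|right].
    - by apply: (FP T FT).1; [right|left].
    - exact: G0v1.
  move=> p [[S FS Sp]|G0p]; last exact: G0v2.
  by apply: (FP S FS).2; left.
have tot : forall x, exists y, (M `|` G0) (x, y).
  move=> x; apply: contrapT => nex.
  have neq : forall p, (M `|` G0) p -> x <> p.1.
    by move=> [a b] Hp /= xa; apply: nex; exists b; rewrite xa.
  pose I := ({p : (msT X * msT Y)%type | (M `|` G0) p} + {k : (msT Y * R)%type | K x k})%type.
  pose c (i : I) := match i with inl p => (sval p).2 | inr k => (sval k).1 end.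
  pose r (i : I) := match i with inl p => mdist X x (sval p).1 | inr k => (sval k).2 end.
  have [y Hy] : exists y, forall i, y \in cball (c i) (r i).
  apply: hY.
  - case=> [[p Hp]|[k Hk]] /=; last exact: Kpos Hk.
    rewrite lt_neqAle dge0 andbT; apply/eqP => /esym /mdist_eq0.
    exact: neq Hp.
  - case=> [[p Hp]|[k Hk]] [[q Hq]|[l Hl]] /=.
    + apply: le_trans (PM.1 _ _ Hp Hq) _.
      by rewrite (mdist_sym x); apply: mdist_triangle.
    + apply: K2 Hl; exact: PM.2 _ Hp.
    + rewrite mdist_sym addrC; apply: K2 Hk; exact: PM.2 _ Hq.
    + exact: K1 Hk Hl.
  have Hy' : forall i, mdist Y (c i) y <= r i by move=> i; exact: set_mem (Hy i).
  apply: (Mmax (M `|` [set (x, y)])).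
    split; first by move=> p Mp; left.
    move=> /(_ (x, y) (or_intror erefl)) Mxy; apply: nex; exists y; left.
    exact: Mxy.
  have Hp1 : forall q, (M `|` G0) q -> mdist Y y q.2 <= mdist X x q.1.
    by move=> q Hq; rewrite mdist_sym; exact: (Hy' (inl (exist _ q Hq))).
  split.
    have Hp2 : forall q, (M `|` G0) q -> mdist Y q.2 y <= mdist X q.1 x.
      by move=> q Hq; rewrite mdist_sym (mdist_sym q.1); exact: Hp1.
    move=> p q [[Mp|->]|G0p] [[Mq|->]|G0q] /=.
    - by apply: PM.1; left.
    - by apply: Hp2; left.
    - by apply: PM.1; [left|right].
    - by apply: Hp1; left.
    - by rewrite !mdist_self.
    - by apply: Hp1; right.
    - by apply: PM.1; [right|left].
    - by apply: Hp2; right.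
    - by apply: PM.1; right.
  move=> p [[Mp|->]|G0p] k Hk.
  - by apply: PM.2; [left|].
  - exact: (Hy' (inr (exist _ k Hk))).
  - by apply: PM.2; [right|].
exists (fun x => projT1 (cid (tot x))); split; [|split].
- move=> [a b] G0p /=; case: cid => y Hy /=.
  apply: mdist_eq0; apply/eqP; rewrite eq_le dge0 andbT.
  by have := PM.1 _ _ Hy (or_intror G0p); rewrite mdist_self.
- move=> x x'; case: cid => y Hy; case: cid => y' Hy' /=.
  exact: PM.1 _ _ Hy Hy'.
- move=> x k Hk; case: cid => y Hy /=; exact: PM.2 _ Hy _ Hk.
Qed.

Lemma le_clos (R : realType) (a r : R) : (forall r', r < r' -> a <= r') -> a <= r.
Proof.
move=> H; apply/ler_addgt0Pr => e e0; apply: H; rewrite ltrDl //.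
Qed.

Lemma phi_ne (R : realType) (X Y : metricSpace R) (A : set X)
  (hA : A !=set0) (hY : hyperconvex Y) (f : {x : X | A x} -> Y) :
  NE (@subdist R X A) f -> Phi_c f !=set0.
Proof.
move=> [[y0 [M HM]] Hne]; have [x0 Ax0] := hA.
pose a0 : {x : X | A x} := exist _ x0 Ax0.
pose K := fun (x : X) (k : (msT Y * R)%type) =>
  exists r, range f `<=` cball k.1 r /\ r < k.2.
pose G0 := fun p : (msT X * msT Y)%type => exists H : A p.1, p.2 = f (exist _ p.1 H).
have [|||||F [FG0 [Fne FK]]] := @ext_lemma R X Y hY K G0.
- move=> x k [r [Hr rk]]; apply: le_lt_trans rk.
  apply: le_trans (dge0 k.1 (f a0)) (Hr _ (imageT f a0)).
- move=> x k l [r [Hr rk]] [s [Hs sl]].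
  apply: le_trans (mdist_triangle k.1 (f a0) l.1) _.
  have := Hr _ (imageT f a0); have := Hs _ (imageT f a0).
  rewrite /cball /= (mdist_sym l.1) => h1 h2.
  apply: ltW; apply: le_lt_trans (lerD h2 h1) _; exact: ltrD.
- move=> x z y k Hz Hk; rewrite mdist_sym; apply: le_trans (Hz k Hk) _.
  by rewrite -{1}(add0r k.2) lerD2r; exact: dge0.
- move=> [p1 p2] [q1 q2] [Hp ->] [Hq ->] /=; exact: Hne.
- move=> [p1 p2] [Hp ->] k [r [Hr rk]] /=; apply: ltW; apply: le_lt_trans rk.
  exact: Hr (imageT _ _).
exists F; split; [split|split].
- exists y0, (M + 1) => x; apply: (FK x (y0, M + 1)); exists M; split.
    by move=> _ [t _ <-]; exact: HM.
  by rewrite ltrDl.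
- exact: Fne.
- by case=> x h; apply: (FG0 (x, f (exist _ x h))); exists h.
- move=> x c r Hr; apply: le_clos => r' rr'; apply: (FK x (c, r')); by exists r.
Qed.

Lemma ext_g (R : realType) (X Y : metricSpace R) (A : set X)
  (hA : A !=set0) (hY : hyperconvex Y) (f g : {x : X | A x} -> Y) (f' : X -> Y) (e : R) :
  NE (@subdist R X A) g -> Phi_c f f' ->
  (forall a, mdist Y (f a) (g a) <= e) ->
  exists g', Phi_c g g' /\ forall x, mdist Y (f' x) (g' x) <= e.
Proof.
move=> [_ Hne] [[[y0 [M HM]] f'ne] [f'A f'cov]] He.
have [x0 Ax0] := hA.
pose a0 : {x : X | A x} := exist _ x0 Ax0.
have e0 : 0 <= e by apply: le_trans (He a0); exact: dge0.
pose K := fun (x : X) (k : (msT Y * R)%type) =>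
  (k.1 = f' x /\ e < k.2) \/ exists r, range g `<=` cball k.1 r /\ r < k.2.
pose G0 := fun p : (msT X * msT Y)%type => exists H : A p.1, p.2 = g (exist _ p.1 H).
have Kpos : forall x k, K x k -> 0 < k.2.
  move=> x k [[_ ek]|[r [Hr rk]]]; first exact: le_lt_trans ek.
  apply: le_lt_trans rk; apply: le_trans (dge0 k.1 (g a0)) (Hr _ (imageT g a0)).
have hcov : forall c r x, range g `<=` cball c r -> mdist Y c (f' x) <= r + e.
  move=> c r x Hr; apply: f'cov => _ [a _ <-].
  apply: le_trans (mdist_triangle c (g a) (f a)) _.
  apply: lerD; first exact: Hr (imageT _ _).
  by rewrite mdist_sym; exact: He.
have [|||||G [GG0 [Gne GK]]] := @ext_lemma R X Y hY K G0.
- exact: Kpos.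
- move=> x k l Hk Hl.
  have k0 := Kpos _ _ Hk; have l0 := Kpos _ _ Hl.
  case: Hk => [[-> ek]|[r [Hr rk]]]; case: Hl => [[-> el]|[s [Hs sl]]].
  + rewrite mdist_self; apply: addr_ge0; exact: ltW.
  + rewrite mdist_sym; apply: le_trans (hcov _ _ x Hs) _.
    rewrite addrC; apply: lerD; exact: ltW.
  + apply: le_trans (hcov _ _ x Hr) _; apply: lerD; exact: ltW.
  + apply: le_trans (mdist_triangle k.1 (g a0) l.1) _.
    have := Hr _ (imageT g a0); have := Hs _ (imageT g a0).
    rewrite /cball /= (mdist_sym l.1) => h1 h2.
    apply: ltW; apply: le_lt_trans (lerD h2 h1) _; exact: ltrD.
- move=> x z y k Hz [[-> ek]|Hk].
  + have Hzy : mdist Y (f' z) y <= e.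
      apply: le_clos => e' ee'; apply: (Hz (f' z, e')); by left.
    apply: le_trans (mdist_triangle y (f' z) (f' x)) _.
    have h1 : mdist Y y (f' z) <= e by rewrite mdist_sym.
    have h2 : mdist Y (f' z) (f' x) <= mdist X x z by rewrite (mdist_sym x); exact: f'ne.
    lra.
  + rewrite mdist_sym; apply: le_trans (Hz k (or_intror Hk)) _.
    by rewrite -{1}(add0r k.2) lerD2r; exact: dge0.
- move=> [p1 p2] [q1 q2] [Hp ->] [Hq ->] /=; exact: Hne.
- move=> [p1 p2] [Hp ->] k [[-> ek]|[r [Hr rk]]] /=; apply: ltW.
  + apply: le_lt_trans ek; rewrite (f'A (exist _ p1 Hp)); exact: He.
  + apply: le_lt_trans rk; exact: Hr (imageT _ _).
have Gf' : forall x, mdist Y (f' x) (G x) <= e.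
  move=> x; apply: le_clos => e' ee'; apply: (GK x (f' x, e')); by left.
exists G; split=> //; split; [split|split].
- exists y0, (M + e) => x.
  apply: le_trans (mdist_triangle y0 (f' x) (G x)) _; exact: lerD.
- exact: Gne.
- by case=> x h; apply: (GG0 (x, g (exist _ x h))); exists h.
- move=> x c r Hr; apply: le_clos => r' rr'; apply: (GK x (c, r')); right; by exists r.
Qed.

Lemma dinf_sym (R : realType) (T : Type) (Y : metricSpace R) (u v : T -> Y) :
  dinf u v = dinf v u.
Proof.
rewrite /dinf.
have -> : (fun t => (mdist Y (u t) (v t))%:E) = (fun t => (mdist Y (v t) (u t))%:E).
  by apply/funext => t; rewrite mdist_sym.
by [].
Qed.

Lemma partC (R : realType) (X Y : metricSpace R) (A : set X)
  (hA : A !=set0) (hY : hyperconvex Y) (f g : {x : X | A x} -> Y) (f' : X -> Y) :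
  NE (@subdist R X A) g -> Phi_c f f' ->
  (ereal_inf [set dinf f' t | t in Phi_c g] <= dinf f g)%E.
Proof.
move=> Hg Hf'; have [x0 Ax0] := hA.
pose a0 : {x : X | A x} := exist _ x0 Ax0.
have ub : forall a, ((mdist Y (f a) (g a))%:E <= dinf f g)%E.
  by move=> a; apply: ereal_sup_ubound; exists a.
case Hd: (dinf f g) => [e| |].
- have He : forall a, mdist Y (f a) (g a) <= e by move=> a; have := ub a; rewrite Hd lee_fin.
  have [G [HG HGe]] := @ext_g _ _ _ _ hA hY f g f' e Hg Hf' He.
  apply: ge_ereal_inf; exists (dinf f' G); first by exists G.
  apply: ge_ereal_sup => _ [x _ <-]; rewrite lee_fin; exact: HGe.
- exact: leey.
- by have := ub a0; rewrite Hd leeNy_eq.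
Qed.

Theorem lemma5p11 (R : realType) (X Y : metricSpace R) (A : set X)
  (hA : A !=set0) (hY : hyperconvex Y) :
  forall f g : {x : X | A x} -> Y,
    NE (@subdist R X A) f -> NE (@subdist R X A) g ->
    Phi_c f !=set0 /\
    (hausdorff (@dinf R X Y) (Phi_c f) (Phi_c g) <= dinf f g)%E.
Proof.
move=> f g Hf Hg; split; first exact: phi_ne.
rewrite /hausdorff ge_max; apply/andP; split.
  apply: ge_ereal_sup => _ [s Hs <-]; exact: partC.
apply: ge_ereal_sup => _ [t Ht <-].
have -> : [set dinf s t | s in Phi_c f] = [set dinf t s | s in Phi_c f].
  by apply/seteqP; split => _ [s Hs <-]; exists s => //; exact: dinf_sym.
rewrite (@dinf_sym _ _ _ f g); exact: partC.
Qed.
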